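(* The logic $\mathsf{CS4}$ has the finite model property: for every formula $\varphi$, if $\mathsf{CS4}\nvdash\varphi$, then there is a $\mathsf{CS4}$-model $\mathcal M=(W,W_\bot,\preccurlyeq,\sqsubseteq,V)$ with $W$ finite such that $\mathcal M\not\models\varphi$. (Conversely, every theorem of $\mathsf{CS4}$ is valid on all $\mathsf{CS4}$-models.)
   Context: Fix a countably infinite set $\mathbb P$ of propositional variables. Formulas: $\varphi,\psi ::= p\mid\bot\mid(\varphi\wedge\psi)\mid(\varphi\vee\psi)\mid(\varphi\to\psi)\mid\Diamond\varphi\mid\Box\varphi$ with $p\in\mathbb P$; $\neg\varphi:=\varphi\to\bot$. A bi-intuitionistic frame is $\mathcal F=(W,W_\bot,\preccurlyeq,\sqsubseteq)$ where $\preccurlyeq$ and $\sqsubseteq$ are preorders on a set $W$ and $W_\bot\subseteq W$ (the fallible worlds) is upward closed under both $\preccurlyeq$ and $\sqsubseteq$; it is infallible if $W_\bot=\varnothing$. A valuation is a map $V:\mathbb P\to 2^W$ such that each $V(p)$ is upward closed under $\preccurlyeq$ and $W_\bot\subseteq V(p)$; a model is $\mathcal M=(W,W_\bot,\preccurlyeq,\sqsubseteq,V)$. Satisfaction: $(\mathcal M,w)\models p$ iff $w\in V(p)$; $(\mathcal M,w)\models\bot$ iff $w\in W_\bot$; $\wedge,\vee$ pointwise; $(\mathcal M,w)\models\varphi\to\psi$ iff for all $v\succcurlyeq w$, $(\mathcal M,v)\models\varphi$ implies $(\mathcal M,v)\models\psi$; $(\mathcal M,w)\models\Diamond\varphi$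 iff for all $u\succcurlyeq w$ there is $v\sqsupseteq u$ with $(\mathcal M,v)\models\varphi$; $(\mathcal M,w)\models\Box\varphi$ iff for all $u,v$ with $w\preccurlyeq u\sqsubseteq v$, $(\mathcal M,v)\models\varphi$. $\mathcal M\models\varphi$ means $(\mathcal M,w)\models\varphi$ for all $w\in W\setminus W_\bot$. For $R\subseteq W\times W$ (relative to $\preccurlyeq$): $R$ is backward confluent if $wRv\preccurlyeq v'$ implies there is $w'$ with $w\preccurlyeq w'Rv'$. A $\mathsf{CS4}$-frame is a bi-intuitionistic frame in which $\sqsubseteq$ is backward confluent; a $\mathsf{CS4}$-model is a model on such a frame. $\mathsf{CS4}$ is the least set of formulas containing all intuitionistic propositional tautologies (in this language) and all instances of $\Box(\varphi\to\psi)\to(\Box\varphi\to\Box\psi)$, $\Box(\varphi\to\psi)\to(\Diamond\varphi\to\Diamond\psi)$, $\Box\varphi\to\varphi$, $\varphi\to\Diamond\varphi$, $\Box\varphi\to\Box\Box\varphi$, $\Diamond\Diamond\varphi\to\Diamond\varphi$, closed under modus ponens and necessitation (from $\varphi$ infer $\Box\varphi$). *)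

(* Defs.v *)
From Stdlib Require Import List.

Inductive form : Type :=
| Var : nat -> form
| Bot : form
| And : form -> form -> form
| Or  : form -> form -> form
| Imp : form -> form -> form
| Dia : form -> form
| Box : form -> form.

Definition Neg (phi : form) : form := Imp phi Bot.

(* Hilbert-style axiomatization of intuitionistic propositional logic in the
   full modal language: its theorems (closed under MP) are exactly the
   substitution instances of intuitionistic propositional tautologies. *)
Inductive IPC_axiom : form -> Prop :=
| ax_K  : forall a b, IPC_axiom (Imp a (Imp b a))
| ax_S  : forall a b c,
    IPC_axiom (Imp (Imp a (Imp b c)) (Imp (Imp a b) (Imp a c)))
| ax_andE1 : forall a b, IPC_axiom (Imp (And a b) a)
| ax_andE2 : forall a b, IPC_axiom (Imp (And a b) b)
| ax_andI  : forall a b, IPC_axiom (Imp a (Imp b (And a b)))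
| ax_orI1  : forall a b, IPC_axiom (Imp a (Or a b))
| ax_orI2  : forall a b, IPC_axiom (Imp b (Or a b))
| ax_orE   : forall a b c,
    IPC_axiom (Imp (Imp a c) (Imp (Imp b c) (Imp (Or a b) c)))
| ax_efq   : forall a, IPC_axiom (Imp Bot a).

Inductive CS4 : form -> Prop :=
| cs4_ipc : forall a, IPC_axiom a -> CS4 a
| cs4_K   : forall a b, CS4 (Imp (Box (Imp a b)) (Imp (Box a) (Box b)))
| cs4_Kd  : forall a b, CS4 (Imp (Box (Imp a b)) (Imp (Dia a) (Dia b)))
| cs4_T   : forall a, CS4 (Imp (Box a) a)
| cs4_Td  : forall a, CS4 (Imp a (Dia a))
| cs4_4   : forall a, CS4 (Imp (Box a) (Box (Box a)))
| cs4_4d  : forall a, CS4 (Imp (Dia (Dia a)) (Dia a))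
| cs4_MP  : forall a b, CS4 (Imp a b) -> CS4 a -> CS4 b
| cs4_Nec : forall a, CS4 a -> CS4 (Box a).

Definition preorder {W : Type} (R : W -> W -> Prop) : Prop :=
  (forall w, R w w) /\ (forall u v w, R u v -> R v w -> R u w).

Definition up_closed {W : Type} (R : W -> W -> Prop) (A : W -> Prop) : Prop :=
  forall w v, A w -> R w v -> A v.

Record frame := {
  world : Type;
  fallible : world -> Prop;
  le : world -> world -> Prop;
  sq : world -> world -> Prop;
  le_pre : preorder le;
  sq_pre : preorder sq;
  fallible_up_le : up_closed le fallible;
  fallible_up_sq : up_closed sq fallible
}.

Definition backward_confluent {W : Type} (le R : W -> W -> Prop) : Prop :=
  forall w v v', R w v -> le v v' -> exists w', le w w' /\ R w' v'.

Definition CS4_frame (F : frame) : Prop := backward_confluent (le F) (sq F).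

Record model := {
  mframe : frame;
  val : nat -> world mframe -> Prop;
  val_up : forall p, up_closed (le mframe) (val p);
  val_fallible : forall p w, fallible mframe w -> val p w
}.

Definition CS4_model (M : model) : Prop := CS4_frame (mframe M).

Fixpoint sat (M : model) (w : world (mframe M)) (phi : form) : Prop :=
  match phi with
  | Var p => val M p w
  | Bot => fallible (mframe M) w
  | And a b => sat M w a /\ sat M w b
  | Or a b => sat M w a \/ sat M w b
  | Imp a b => forall v, le (mframe M) w v -> sat M v a -> sat M v b
  | Dia a => forall u, le (mframe M) w u ->
               exists v, sq (mframe M) u v /\ sat M v a
  | Box a => forall u v, le (mframe M) w u -> sq (mframe M) u v -> sat M v a
  end.

Definition valid_in (M : model) (phi : form) : Prop :=
  forall w, ~ fallible (mframe M) w -> sat M w phi.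

Definition finite_type (T : Type) : Prop := exists l : list T, forall x, In x l.

(* Main.v *)
Require Import Defs.
From Stdlib Require Import List Classical ClassicalEpsilon FunctionalExtensionality PropExtensionality.
Import ListNotations.

Section Sound.
Variable M : model.

Lemma le_r : forall w, le (mframe M) w w.
Proof. apply (le_pre (mframe M)). Qed.
Lemma le_t : forall u v w, le (mframe M) u v -> le (mframe M) v w -> le (mframe M) u w.
Proof. apply (le_pre (mframe M)). Qed.
Lemma sq_r : forall w, sq (mframe M) w w.
Proof. apply (sq_pre (mframe M)). Qed.
Lemma sq_t : forall u v w, sq (mframe M) u v -> sq (mframe M) v w -> sq (mframe M) u w.
Proof. apply (sq_pre (mframe M)). Qed.

Lemma persist : forall a w v, le (mframe M) w v -> sat M w a -> sat M v a.
Proof.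
  induction a; simpl; intros w v Hwv H.
  - eapply val_up; eauto.
  - eapply fallible_up_le; eauto.
  - destruct H; split; eauto.
  - destruct H; [left|right]; eauto.
  - intros u Hvu Hu. apply (H u); [eapply le_t; eauto | auto].
  - intros u Hvu. apply H. eapply le_t; eauto.
  - intros u x Hvu Hux. apply (H u x); [eapply le_t; eauto | auto].
Qed.

Lemma fall_sat : forall a w, fallible (mframe M) w -> sat M w a.
Proof.
  induction a; simpl; intros w Hf.
  - apply val_fallible; auto.
  - auto.
  - split; auto.
  - left; auto.
  - intros v Hwv _. apply IHa2. eapply fallible_up_le; eauto.
  - intros u Hwu. exists u. split. apply sq_r. apply IHa. eapply fallible_up_le; eauto.
  - intros u v Hwu Huv. apply IHa. eapply fallible_up_sq; [eapply fallible_up_le|]; eauto.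
Qed.

Lemma sound : CS4_model M -> forall a, CS4 a -> forall w, sat M w a.
Proof.
  intros HBC a Ha. induction Ha; simpl.
  - destruct H; simpl.
    + intros w v1 _ Ha v2 H12 Hb. eapply persist; eauto.
    + intros w v1 _ H1 v2 H12 H2 v3 H23 Hx.
      apply (H1 v3 (le_t _ _ _ H12 H23) Hx v3 (le_r _)). apply (H2 v3 H23 Hx).
    + intros w v _ [Hx Hy]; auto.
    + intros w v _ [Hx Hy]; auto.
    + intros w v1 _ Hx v2 H12 Hy. split; [eapply persist; eauto | auto].
    + intros w v _ Hx; left; auto.
    + intros w v _ Hx; right; auto.
    + intros w v1 _ H1 v2 H12 H2 v3 H23 [Hx|Hx].
      * apply (H1 v3 (le_t _ _ _ H12 H23) Hx).
      * apply (H2 v3 H23 Hx).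
    + intros w v _ Hb. apply fall_sat; auto.
  - intros w v1 _ H1 v2 H12 H2 u x Hu Hux.
    apply (H1 u x (le_t _ _ _ H12 Hu) Hux x (le_r _)). apply (H2 u x Hu Hux).
  - intros w v1 _ H1 v2 H12 H2 u Hu. destruct (H2 u Hu) as [x [Hux Hx]].
    exists x; split; auto. apply (H1 u x (le_t _ _ _ H12 Hu) Hux x (le_r _) Hx).
  - intros w v _ H. apply (H v v (le_r _) (sq_r _)).
  - intros w v _ H u Hu. exists u. split; [apply sq_r | eapply persist; eauto].
  - intros w v _ H u x Hu Hux y z Hxy Hyz.
    destruct (HBC u x y Hux Hxy) as [u' [Huu' Hu'y]].
    apply (H u' z (le_t _ _ _ Hu Huu') (sq_t _ _ _ Hu'y Hyz)).
  - intros w v _ H u Hu. destruct (H u Hu) as [x [Hux Hx]].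
    destruct (Hx x (le_r _)) as [y [Hxy Hy]]. exists y; split; [eapply sq_t; eauto | auto].
  - intros w. apply (IHHa1 w w (le_r _) (IHHa2 w)).
  - intros w u v _ _. apply IHHa.
Qed.
End Sound.

Inductive Der (G : form -> Prop) : form -> Prop :=
| D_ax : forall a, G a -> Der G a
| D_thm : forall a, CS4 a -> Der G a
| D_mp : forall a b, Der G (Imp a b) -> Der G a -> Der G b.

Lemma Der_mono G H a : (forall x, G x -> H x) -> Der G a -> Der H a.
Proof. intros HGH D; induction D; [apply D_ax; auto | apply D_thm; auto | eapply D_mp; eauto]. Qed.

Lemma Der_cut G H a : Der G a -> (forall x, G x -> Der H x) -> Der H a.
Proof. intros D HGH; induction D; [auto | apply D_thm; auto | eapply D_mp; eauto]. Qed.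

Lemma Der_ipc G a : IPC_axiom a -> Der G a.
Proof. intros; apply D_thm, cs4_ipc; auto. Qed.

Lemma Der_I G a : Der G (Imp a a).
Proof.
  eapply D_mp. eapply D_mp. apply Der_ipc, (ax_S a (Imp a a) a).
  apply Der_ipc, ax_K. apply Der_ipc, ax_K.
Qed.

Lemma deduction G a b : Der (fun y => G y \/ y = a) b -> Der G (Imp a b).
Proof.
  intros D; induction D.
  - destruct H as [H| <-].
    + eapply D_mp. apply Der_ipc, ax_K. apply D_ax; auto.
    + apply Der_I.
  - eapply D_mp. apply Der_ipc, ax_K. apply D_thm; auto.
  - eapply D_mp. eapply D_mp. apply Der_ipc, ax_S. exact IHD1. exact IHD2.
Qed.

Lemma Der_empty a : Der (fun _ => False) a -> CS4 a.
Proof. intros D; induction D; [contradiction | auto | eapply cs4_MP; eauto]. Qed.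

Lemma box_lemma G a : Der G a -> Der (fun y => exists x, G x /\ y = Box x) (Box a).
Proof.
  intros D; induction D.
  - apply D_ax. eauto.
  - apply D_thm, cs4_Nec; auto.
  - eapply D_mp. eapply D_mp. apply D_thm, cs4_K. exact IHD1. exact IHD2.
Qed.

Lemma boxes_to G a : Der (fun x => exists b, x = Box b /\ G (Box b)) a -> Der G (Box a).
Proof.
  intros D. apply box_lemma in D. eapply Der_cut; [exact D|].
  intros y [x [[b [-> Hb]] ->]]. eapply D_mp. apply D_thm, cs4_4. apply D_ax; auto.
Qed.

Fixpoint sub (f : form) : list form :=
  f :: match f with
       | And a b | Or a b | Imp a b => sub a ++ sub b
       | Dia a | Box a => sub a
       | _ => []
       end.

Lemma sub_refl f : In f (sub f).
Proof. destruct f; simpl; auto. Qed.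

Lemma sub_trans : forall z x y, In x (sub y) -> In y (sub z) -> In x (sub z).
Proof.
  induction z; intros x y H1 H2; simpl in H2; destruct H2 as [<-|H2]; auto; simpl; right;
  try (apply in_app_or in H2; apply in_or_app; destruct H2; [left; eapply IHz1 | right; eapply IHz2]; eauto);
  try (eapply IHz; eauto); try contradiction.
Qed.

Section Canon.
Variable S : list form.
Hypothesis HBot : In Bot S.
Hypothesis Hclos : forall x y, In y S -> In x (sub y) -> In x S.

Lemma cl_and a b : In (And a b) S -> In a S /\ In b S.
Proof. intros H; split; eapply Hclos; eauto; simpl; right; apply in_or_app; [left|right]; apply sub_refl. Qed.
Lemma cl_or a b : In (Or a b) S -> In a S /\ In b S.
Proof. intros H; split; eapply Hclos; eauto; simpl; right; apply in_or_app; [left|right]; apply sub_refl. Qed.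
Lemma cl_imp a b : In (Imp a b) S -> In a S /\ In b S.
Proof. intros H; split; eapply Hclos; eauto; simpl; right; apply in_or_app; [left|right]; apply sub_refl. Qed.
Lemma cl_dia a : In (Dia a) S -> In a S.
Proof. intros H; eapply Hclos; eauto; simpl; right; apply sub_refl. Qed.
Lemma cl_box a : In (Box a) S -> In a S.
Proof. intros H; eapply Hclos; eauto; simpl; right; apply sub_refl. Qed.

Definition closed (G : form -> Prop) := forall p, In p S -> Der G p -> G p.
Definition prime (G : form -> Prop) := forall a b, G (Or a b) -> G a \/ G b.

Record W := mkW {
  th : form -> Prop;
  tg : option form;
  w_sub : forall x, th x -> In x S;
  w_cl : closed th;
  w_pr : prime th;
  w_tg : forall c, tg = Some c -> In (Dia c) S /\ ~ th (Dia c)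
}.

Lemma tg_none (G : form -> Prop) : forall c, (None : option form) = Some c -> In (Dia c) S /\ ~ G (Dia c).
Proof. intros c H; discriminate. Qed.

Section Lind.
Variable chi : form.
Variable D0 : form -> Prop.

Fixpoint ext (l : list form) : form -> Prop :=
  match l with
  | [] => D0
  | s :: l' => fun x => ext l' x \/ (x = s /\ ~ Der (fun y => ext l' y \/ y = s) chi)
  end.

Lemma ext_incl : forall l x, D0 x -> ext l x.
Proof. induction l; simpl; auto. Qed.

Lemma ext_sub : (forall x, D0 x -> In x S) -> forall l, incl l S -> forall x, ext l x -> In x S.
Proof.
  intros H0; induction l; simpl; intros Hl x Hx; auto.
  destruct Hx as [Hx|[-> _]]. apply IHl; auto. intros y Hy; apply Hl; simpl; auto.
  apply Hl; simpl; auto.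
Qed.

Lemma ext_cons : ~ Der D0 chi -> forall l, ~ Der (ext l) chi.
Proof.
  intros H0; induction l; simpl; auto. intros D.
  destruct (classic (Der (fun y => ext l y \/ y = a) chi)) as [H|H].
  - apply IHl. eapply Der_mono; [|exact D]. intros x [Hx|[_ Hx]]; tauto.
  - apply H. eapply Der_mono; [|exact D]. intros x [Hx|[Hx _]]; auto.
Qed.

Lemma ext_max : forall l s, In s l -> ext l s \/ Der (fun y => ext l y \/ y = s) chi.
Proof.
  induction l; simpl; intros s Hs; [contradiction|]. destruct Hs as [<-|Hs].
  - destruct (classic (Der (fun y => ext l y \/ y = a) chi)) as [H|H].
    + right. eapply Der_mono; [|exact H]. intros x [Hx|Hx]; auto.
    + left; right; auto.
  - destruct (IHl s Hs) as [H|H]; [left; left; auto | right].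
    eapply Der_mono; [|exact H]. intros x [Hx|Hx]; auto.
Qed.
End Lind.

Lemma lindenbaum D0 chi : (forall x, D0 x -> In x S) -> ~ Der D0 chi ->
  exists D, (forall x, D0 x -> D x) /\ (forall x, D x -> In x S) /\ closed D /\ prime D /\ ~ Der D chi.
Proof.
  intros H0 Hn. exists (ext chi D0 S). split; [|split; [|split; [|split]]].
  - apply ext_incl.
  - apply ext_sub; auto. intros y Hy; auto.
  - intros p Hp Dp. destruct (ext_max chi D0 S p Hp) as [H|H]; auto.
    exfalso. apply (ext_cons chi D0 Hn S). eapply D_mp; [apply deduction; exact H | exact Dp].
  - intros a b Hab. apply (ext_sub chi D0 H0 S (fun y Hy => Hy)) in Hab as HS.
    apply cl_or in HS as [Ha Hb].
    destruct (ext_max chi D0 S a Ha) as [H1|H1]; auto.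
    destruct (ext_max chi D0 S b Hb) as [H2|H2]; auto.
    exfalso. apply (ext_cons chi D0 Hn S).
    eapply D_mp. eapply D_mp. eapply D_mp. apply Der_ipc, ax_orE.
    apply deduction; exact H1. apply deduction; exact H2. apply D_ax; auto.
  - apply ext_cons; auto.
Qed.

Definition leW (w v : W) := forall x, th w x -> th v x.
Definition sqW (w v : W) := (forall b, th w (Box b) -> th v (Box b)) /\ (th w Bot -> th v Bot)
  /\ (forall c, tg w = Some c -> tg v = Some c).
Definition fallW (w : W) := th w Bot.

Lemma leW_pre : preorder leW.
Proof. split; unfold leW; auto. Qed.
Lemma sqW_pre : preorder sqW.
Proof.
  split; unfold sqW.
  - intros w; repeat split; auto.
  - intros u v w [H1 [H2 H3]] [H4 [H5 H6]]; repeat split; auto.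
Qed.
Lemma fallW_le : up_closed leW fallW.
Proof. intros w v H1 H2; apply H2; auto. Qed.
Lemma fallW_sq : up_closed sqW fallW.
Proof. intros w v H1 H2; apply H2; auto. Qed.

Definition CF : frame := {| world := W; fallible := fallW; le := leW; sq := sqW;
  le_pre := leW_pre; sq_pre := sqW_pre; fallible_up_le := fallW_le; fallible_up_sq := fallW_sq |}.

Definition valW (p : nat) (w : W) : Prop := th w (Var p) \/ th w Bot.
Lemma valW_up : forall p, up_closed (le CF) (valW p).
Proof. intros p w v [H|H] Hwv; [left|right]; apply Hwv; auto. Qed.
Lemma valW_fall : forall p w, fallible CF w -> valW p w.
Proof. intros p w H; right; auto. Qed.

Definition CM : model := {| mframe := CF; val := valW; val_up := valW_up; val_fallible := valW_fall |}.

Lemma CM_BC : CS4_model CM.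
Proof.
  intros w v v' [Hb [Hbot Htg]] Hvv'.
  exists (mkW (th w) None (w_sub w) (w_cl w) (w_pr w) (tg_none (th w))).
  split. intros x Hx; exact Hx.
  repeat split; simpl; auto. intros c H; discriminate.
Qed.

Lemma efq_cl (w : W) p : th w Bot -> In p S -> th w p.
Proof.
  intros H Hp. apply (w_cl w); auto. eapply D_mp. apply Der_ipc, ax_efq. apply D_ax; auto.
Qed.

Definition fullW : W.
Proof.
  refine (mkW (fun x => In x S) None (fun x H => H) _ _ (tg_none _)).
  - intros p Hp _; auto.
  - intros a b H. left. apply (cl_or a b H).
Defined.

Lemma truth : forall p, In p S -> forall w : W, sat CM w p <-> th w p.
Proof.
  induction p; intros HS w; simpl.
  - unfold valW. split; [intros [H|H]; auto; apply efq_cl; auto | auto].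
  - unfold fallW; tauto.
  - destruct (cl_and _ _ HS) as [H1 H2]. rewrite (IHp1 H1), (IHp2 H2). split.
    + intros [Ha Hb]. apply (w_cl w); auto. eapply D_mp. eapply D_mp. apply Der_ipc, ax_andI.
      apply D_ax; auto. apply D_ax; auto.
    + intros H; split; apply (w_cl w); auto; (eapply D_mp; [apply Der_ipc; constructor | apply D_ax; exact H]).
  - destruct (cl_or _ _ HS) as [H1 H2]. rewrite (IHp1 H1), (IHp2 H2). split.
    + intros [H|H]; apply (w_cl w); auto; (eapply D_mp; [apply Der_ipc; constructor | apply D_ax; exact H]).
    + apply w_pr.
  - destruct (cl_imp _ _ HS) as [H1 H2]. split.
    + intros H. apply NNPP; intros Hn.
      assert (Hd : ~ Der (fun y => th w y \/ y = p1) p2).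
      { intros D. apply Hn, (w_cl w); auto. apply deduction; auto. }
      destruct (lindenbaum _ _ (fun x Hx => match Hx with or_introl h => w_sub w x h | or_intror e => eq_ind_r (fun z => In z S) H1 e end) Hd)
        as [D [HD0 [HDs [HDc [HDp HDn]]]]].
      set (v := mkW D None HDs HDc HDp (tg_none D)).
      assert (Hv : sat CM v p2).
      { apply (H v). intros x Hx; apply HD0; auto. apply (IHp1 H1 v). simpl. apply HD0; auto. }
      apply (IHp2 H2 v) in Hv. apply HDn, D_ax; auto.
    + intros H v Hwv Hv. apply (IHp1 H1 v) in Hv. apply (IHp2 H2 v).
      apply (w_cl v); auto. eapply D_mp; apply D_ax; [apply Hwv; exact H | exact Hv].
  - pose proof (cl_dia _ HS) as H1. split.
    + intros H. apply NNPP; intros Hn.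
      assert (Htg : forall c, Some p = Some c -> In (Dia c) S /\ ~ th w (Dia c)).
      { intros c E; injection E as <-; auto. }
      set (u := mkW (th w) (Some p) (w_sub w) (w_cl w) (w_pr w) Htg).
      destruct (H u (fun x Hx => Hx)) as [v [[_ [_ Hvt]] Hv]].
      apply (IHp H1 v) in Hv. destruct (w_tg v p (Hvt p eq_refl)) as [_ Hnv].
      apply Hnv, (w_cl v); auto. eapply D_mp. apply D_thm, cs4_Td. apply D_ax; auto.
    + intros H u Hwu. pose proof (Hwu _ H) as Hu.
      set (D0 := fun x => (exists b, x = Box b /\ th u (Box b)) \/ x = p).
      assert (HD0s : forall x, D0 x -> In x S).
      { intros x [[b [-> Hb]]| ->]; auto. apply (w_sub u); auto. }
      assert (Hkey : forall c, Der D0 c -> Der (th u) (Box (Imp p c))).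
      { intros c Dc. apply boxes_to, deduction. eapply Der_mono; [|exact Dc].
        intros x [Hx|Hx]; auto. }
      destruct (tg u) as [c|] eqn:Etg.
      * destruct (w_tg u c Etg) as [Hc Hnc].
        assert (Hd : ~ Der D0 (Dia c)).
        { intros Dc. apply Hkey in Dc. apply Hnc, (w_cl u); auto.
          eapply D_mp. apply D_thm, cs4_4d. eapply D_mp. eapply D_mp. apply D_thm, cs4_Kd.
          exact Dc. apply D_ax; auto. }
        destruct (lindenbaum _ _ HD0s Hd) as [D [HD0 [HDs [HDc [HDp HDn]]]]].
        assert (Htg : forall c', Some c = Some c' -> In (Dia c') S /\ ~ D (Dia c')).
        { intros c' E; injection E as <-. split; auto. intros Hx; apply HDn, D_ax; auto. }
        exists (mkW D (Some c) HDs HDc HDp Htg). split.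
        -- repeat split; simpl.
           ++ intros b Hb. apply HD0. left; eauto.
           ++ intros Hb. exfalso. apply Hnc. apply efq_cl; auto.
           ++ rewrite Etg; auto.
        -- apply (IHp H1). simpl. apply HD0. right; auto.
      * destruct (classic (th u Bot \/ Der D0 Bot)) as [Hb|Hb].
        -- exists fullW. split.
           ++ repeat split; simpl.
              ** intros b Hb'. apply (w_sub u); auto.
              ** auto.
              ** rewrite Etg; intros c' E; discriminate.
           ++ apply (IHp H1). simpl. auto.
        -- destruct (lindenbaum D0 Bot HD0s (fun h => Hb (or_intror h))) as [D [HD0 [HDs [HDc [HDp HDn]]]]].
           exists (mkW D None HDs HDc HDp (tg_none D)). split.
           ++ repeat split; simpl.
              ** intros b Hb'. apply HD0. left; eauto.
              ** intros Hb'; exfalso; apply Hb; left; auto.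
              ** rewrite Etg; intros c' E; discriminate.
           ++ apply (IHp H1). simpl. apply HD0. right; auto.
  - pose proof (cl_box _ HS) as H1. split.
    + intros H. apply NNPP; intros Hn.
      set (D0 := fun x => exists b, x = Box b /\ th w (Box b)).
      assert (HD0s : forall x, D0 x -> In x S).
      { intros x [b [-> Hb]]. apply (w_sub w); auto. }
      assert (Hd : ~ Der D0 p).
      { intros Dp. apply Hn, (w_cl w); auto. apply boxes_to; auto. }
      destruct (lindenbaum _ _ HD0s Hd) as [D [HD0 [HDs [HDc [HDp HDn]]]]].
      set (u := mkW (th w) None (w_sub w) (w_cl w) (w_pr w) (tg_none (th w))).
      set (v := mkW D None HDs HDc HDp (tg_none D)).
      assert (Hv : sat CM v p).
      { apply (H u v (fun x Hx => Hx)). repeat split; simpl.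
        - intros b Hb. apply HD0. exists b; auto.
        - intros Hb. exfalso. apply Hn. apply efq_cl; auto.
        - intros c E; discriminate. }
      apply (IHp H1 v) in Hv. apply HDn, D_ax; auto.
    + intros H u v Hwu [Huv _]. apply (IHp H1 v).
      apply (w_cl v); auto. eapply D_mp. apply D_thm, cs4_T. apply D_ax. apply Huv, Hwu; auto.
Qed.

Fixpoint subsets (l : list form) : list (form -> Prop) :=
  match l with
  | [] => [fun _ => False]
  | a :: l' => flat_map (fun P => [P; fun x => x = a \/ P x]) (subsets l')
  end.

Lemma subsets_spec : forall l (P : form -> Prop), (forall x, P x -> In x l) -> In P (subsets l).
Proof.
  induction l; intros P HP.
  - simpl. left. extensionality x. apply propositional_extensionality.
    split; [contradiction | intros Hx; apply (HP x Hx)].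
  - set (P' := fun x => P x /\ x <> a).
    assert (HP' : In P' (subsets l)).
    { apply IHl. intros x [Hx Hne]. destruct (HP x Hx); auto. congruence. }
    simpl. apply in_flat_map. exists P'. split; auto.
    destruct (classic (P a)) as [Ha|Ha].
    + right; left. extensionality x. apply propositional_extensionality. unfold P'. split.
      * intros [->|[Hx _]]; auto.
      * intros Hx. destruct (classic (x = a)); auto.
    + left. extensionality x. apply propositional_extensionality. unfold P'. split.
      * intros [Hx _]; auto.
      * intros Hx; split; auto. intros ->; auto.
Qed.

Lemma W_eq (w v : W) : th w = th v -> tg w = tg v -> w = v.
Proof.
  destruct w, v; simpl; intros E1 E2; subst. f_equal; apply proof_irrelevance.
Qed.

Definition pick (p : (form -> Prop) * option form) : list W :=
  match excluded_middle_informative (exists w : W, th w = fst p /\ tg w = snd p) with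
  | left H => [proj1_sig (constructive_indefinite_description _ H)]
  | right _ => []
  end.

Lemma W_finite : finite_type W.
Proof.
  exists (flat_map pick (list_prod (subsets S) (None :: map Some S))).
  intros x. apply in_flat_map. exists (th x, tg x). split.
  - apply in_prod. apply subsets_spec, w_sub.
    destruct (tg x) eqn:E; [right; apply in_map | left; auto].
    apply cl_dia, (w_tg x f E).
  - unfold pick. destruct (excluded_middle_informative _) as [H|H].
    + destruct (constructive_indefinite_description _ H) as [w [H1 H2]]; simpl.
      left. apply W_eq; simpl in *; auto.
    + exfalso; apply H; exists x; auto.
Qed.

End Canon.

Theorem mainTheorem1 :
  (forall phi : form, ~ CS4 phi ->
     exists M : model, CS4_model M /\ finite_type (world (mframe M)) /\
                       ~ valid_in M phi)
  /\
  (forall phi : form, CS4 phi -> forall M : model, CS4_model M -> valid_in M phi).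
Proof.
  split.
  - intros phi Hphi.
    set (S := Bot :: sub phi).
    assert (HBot : In Bot S) by (left; auto).
    assert (Hclos : forall x y, In y S -> In x (sub y) -> In x S).
    { intros x y [<-|Hy] Hx.
      - simpl in Hx. destruct Hx as [<-|[]]; left; auto.
      - right. eapply sub_trans; eauto. }
    exists (CM S). split; [apply CM_BC|]. split; [apply W_finite; auto|].
    intros Hval.
    assert (Hphi_in : In phi S) by (right; apply sub_refl).
    assert (Hd : ~ Der (fun _ => False) phi) by (intros D; apply Hphi, Der_empty; auto).
    destruct (lindenbaum S Hclos (fun _ => False) phi (fun x H => match H with end) Hd)
      as [D [_ [HDs [HDc [HDp HDn]]]]].
    set (w := mkW S D None HDs HDc HDp (tg_none S D)).
    assert (Hw : sat (CM S) w phi).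
    { apply Hval. simpl. unfold fallW; simpl. intros Hb. apply HDn.
      eapply D_mp. apply Der_ipc, ax_efq. apply D_ax; auto. }
    apply (truth S HBot Hclos phi Hphi_in w) in Hw. apply HDn, D_ax; auto.
  - intros phi Hphi M HM w _. apply sound; auto.
Qed.
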